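(* $$\sum_{n\ge0}S_n(1,q)\frac{z^n}{n!}=\frac{1}{(1-\sin z)^q},$$ and for $n\ge1$, $$S_n(x,-1)=\begin{cases}(1-x)(1-2x)^{m-1},& n=2m,\\ -(1-2x)^m,& n=2m+1.\end{cases}$$
   Context: Permutations of $[n]=\{1,\dots,n\}$ are written in standard cycle decomposition (each cycle starts with its smallest element, cycles in increasing order of smallest elements). $\pi$ has an excedance at $i$ if $\pi(i)>i$; ${\rm exc}(\pi)$ is the number of excedances, ${\rm cyc}(\pi)$ the number of cycles. A value $x$ is a double excedance of $\pi$ if $\pi^{-1}(x)<x<\pi(x)$. A permutation $\pi$ of $[n]$ is a simsun permutation of the second kind if for every $k\in\{0,1,\dots,n\}$, deleting the $k$ largest letters from the cycle decomposition of $\pi$ yields a permutation with no double excedances; $\mathcal{SS}_n$ is the set of these, $S_n(x,q)=\sum_{\pi\in\mathcal{SS}_n}x^{{\rm exc}(\pi)}q^{{\rm cyc}(\pi)}$, and $S_0(x,q)=1$. *)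

(* Defs.v *)
From HB Require Import structures.
From mathcomp Require Import all_boot all_order all_algebra all_fingroup.
From mathcomp Require Import all_classical all_reals all_analysis.
Set Implicit Arguments. Unset Strict Implicit. Unset Printing Implicit Defensive.
Import Order.TTheory GRing.Theory Num.Theory.

(* A permutation of [n] = {1..n} is represented by s : 'S_n, a permutation of
   'I_n = {0..n-1}; element i : 'I_n stands for i+1.  This shift preserves the
   order, hence excedances, double excedances and cycles. *)

Definition exc n (s : 'S_n) : nat := #|[set i : 'I_n | (i < s i)%N]|.

(* Number of cycles (fixed points count as cycles of length 1). *)
Definition cyc n (s : 'S_n) : nat := #|porbits s|.

(* Deleting the letters >= m (i.e. the n - m largest letters of [n]) from the
   cycle decomposition of s: in each cycle, the new successor of a surviving
   letter i < m is the next letter along its cycle that survives, i.e.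
   s^j(i) for the least j >= 1 with s^j(i) < m.  (The cycle of i has length
   <= n, so it is found among j = 1..n.) *)
Definition del_succ n (s : 'S_n) (m : nat) (i : 'I_n) : 'I_n :=
  let k := find (fun k => (iter k.+1 s i < m)%N) (iota 0 n) in iter k.+1 s i.

Definition del_dexc n (s : 'S_n) (m : nat) (x : 'I_n) : bool :=
  [exists y : 'I_n, [&& (y < m)%N, del_succ s m y == x, (y < x)%N &
                        (x < del_succ s m x)%N]].

(* simsun permutations of the second kind: for every k in {0..n}, deleting the
   k largest letters (m = n - k survivors, m ranging over {0..n}) leaves a
   permutation with no double excedance. *)
Definition simsun2 n (s : 'S_n) : bool :=
  [forall m : 'I_n.+1, forall x : 'I_n, (x < m)%N ==> ~~ del_dexc s m x].

Definition SS n : {set 'S_n} := [set s | simsun2 s].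

(* S_n(x,q) evaluated in a commutative ring (S_0 = 1 automatically, since
   'S_0 has a single permutation with 0 excedances and 0 cycles). *)
Definition Sxq (R : comNzRingType) n (x q : R) : R :=
  (\sum_(s in SS n) x ^+ exc s * q ^+ cyc s)%R.

(* Main.v *)
Require Import Defs.
From HB Require Import structures.
From mathcomp Require Import all_boot all_order all_algebra all_fingroup.
From mathcomp Require Import all_classical all_reals all_analysis.
From mathcomp Require Import zify ring lra.
Import Order.TTheory GRing.Theory Num.Theory.
Set Implicit Arguments. Unset Strict Implicit. Unset Printing Implicit Defensive.

Lemma iter_return N (f : 'S_N) (i : 'I_N) : exists2 k, (0 < k <= N)%N & iter k f i = i.
Proof.
exists #|porbit f i|; last exact: iter_porbit.
rewrite lt0n card_porbit_neq0 /=.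
by apply: leq_trans (max_card _) _; rewrite card_ord.
Qed.

Lemma del_succ_char N (f : 'S_N) (m : nat) (i : 'I_N) K :
  (i < m)%N -> (0 < K)%N -> (iter K f i < m)%N ->
  (forall l, (0 < l < K)%N -> (m <= iter l f i)%N) ->
  del_succ f m i = iter K f i.
Proof.
move=> im K0 KP Kmin.
have [k0 /andP[k00 k0N] k0i] := iter_return f i.
have KN : (K <= k0)%N.
  rewrite leqNgt; apply/negP => k0K.
  by have := Kmin k0; rewrite k00 k0K k0i leqNgt im => /(_ isT).
rewrite /del_succ.
set P := fun k => (iter k.+1 f i < m)%N.
have hasP : has P (iota 0 N).
  apply/hasP; exists K.-1; last by rewrite /P prednK.
  by rewrite mem_iota /= add0n prednK // (leq_trans KN k0N).
set k := find P (iota 0 N).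
have kN : (k < N)%N by rewrite has_find size_iota in hasP.
have Pk : P k by have := nth_find 0 hasP; rewrite nth_iota.
have kK : k = K.-1.
  apply/eqP; rewrite eqn_leq; apply/andP; split.
    rewrite leqNgt; apply/negP => Kk.
    have := before_find 0 Kk; rewrite nth_iota ?add0n; last exact: ltn_trans Kk kN.
    by rewrite /P prednK // KP.
  rewrite leqNgt; apply/negP => kK.
  have := Kmin k.+1; rewrite /= -(ltn_predRL) kK => /(_ isT).
  by rewrite leqNgt; move: Pk; rewrite /P => ->.
by rewrite kK prednK.
Qed.

Lemma del_succ_spec N (f : 'S_N) (m : nat) (i : 'I_N) : (i < m)%N ->
  exists K, [/\ (0 < K)%N, del_succ f m i = iter K f i, (iter K f i < m)%N &
     forall l, (0 < l < K)%N -> (m <= iter l f i)%N].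
Proof.
move=> im.
have [k0 /andP[k00 k0N] k0i] := iter_return f i.
set P := fun k => (iter k.+1 f i < m)%N.
have hasP : has P (iota 0 N).
  apply/hasP; exists k0.-1; last by rewrite /P prednK // k0i.
  by rewrite mem_iota /= add0n prednK.
set k := find P (iota 0 N).
have kN : (k < N)%N by rewrite has_find size_iota in hasP.
have Pk : P k by have := nth_find 0 hasP; rewrite nth_iota.
exists k.+1; split => //.
move=> l /andP[l0 lk].
have lk' : (l.-1 < k)%N by rewrite prednK.
have := before_find 0 lk'.
rewrite nth_iota ?add0n; last exact: ltn_trans lk' kN.
by rewrite /P prednK // => /negbT; rewrite -leqNgt.
Qed.

Section Deletion.
Variables (n : nat) (s : 'S_n.+1) (sg : 'S_n).
Local Notation w := (lift ord_max).
Hypothesis Hstep : forall y : 'I_n,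
  s (w y) = w (sg y) \/ (s (w y) = ord_max /\ s ord_max = w (sg y)).

Lemma val_w (y : 'I_n) : (w y : nat) = y.
Proof. by rewrite lift_max. Qed.

Lemma del_path m (i : 'I_n) K : (m <= n)%N ->
  (forall l, (0 < l < K)%N -> (m <= iter l sg i)%N) ->
  forall l, (0 < l <= K)%N ->
  exists L, [/\ (0 < L)%N, iter L s (w i) = w (iter l sg i) &
     forall l', (0 < l' < L)%N -> (m <= iter l' s (w i))%N].
Proof.
move=> mn Kmin; elim=> [|l IH] //; rewrite ltnS => /andP[_ lK].
have [l0|lpos] := posnP l.
  subst l; case: (Hstep i) => [h|[h1 h2]].
    by exists 1%N; split => //= l' /andP[a b]; move: a b; case: l'.
  exists 2%N; split => //=; first by rewrite h1 h2.
  move=> l' /andP[a b]; have -> : l' = 1%N by case: l' a b => [|[|]].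
  by rewrite /= h1 /=.
have lpK : (0 < l <= K)%N by rewrite lpos ltnW.
have [L [L0 HL HLmin]] := IH lpK.
have my : (m <= iter l sg i)%N by apply: Kmin; rewrite lpos lK.
case: (Hstep (iter l sg i)) => [h|[h1 h2]].
  exists L.+1; split => //; first by rewrite iterS HL h.
  move=> l' /andP[a b]; rewrite ltnS leq_eqVlt in b; case/orP: b => [/eqP->|b].
    by rewrite HL val_w.
  by apply: HLmin; rewrite a b.
exists L.+2; split => //; first by rewrite !iterS HL h1 h2.
move=> l' /andP[a b]; rewrite ltnS leq_eqVlt in b; case/orP: b => [/eqP->|b].
  by rewrite iterS HL h1 /=.
rewrite ltnS leq_eqVlt in b; case/orP: b => [/eqP->|b].
  by rewrite HL val_w.
by apply: HLmin; rewrite a b.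
Qed.

Lemma del_succ_lift m (i : 'I_n) : (m <= n)%N -> (i < m)%N ->
  del_succ s m (w i) = w (del_succ sg m i).
Proof.
move=> mn im.
have [K [K0 dK KP Kmin]] := del_succ_spec sg im.
have KK : (0 < K <= K)%N by rewrite K0 leqnn.
have [L [L0 HL HLmin]] := del_path mn Kmin KK.
rewrite dK -HL; apply: del_succ_char => //; first by rewrite val_w.
by rewrite HL val_w.
Qed.
End Deletion.


Lemma simsun2P N (f : 'S_N) :
  reflect (forall m, (m <= N)%N -> forall x : 'I_N, (x < m)%N -> ~~ del_dexc f m x)
          (simsun2 f).
Proof.
apply: (iffP forallP) => [H m mN x xm | H m].
  have := H (Ordinal (n:=N.+1) (m:=m) mN) => /forallP/(_ x).
  by rewrite /= xm.
apply/forallP => x; apply/implyP => xm; apply: H => //.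
by rewrite -ltnS.
Qed.

Lemma del_succ_top N (f : 'S_N) (x : 'I_N) : del_succ f N x = f x.
Proof.
rewrite (del_succ_char (K:=1)) //; first by move=> [|l].
Qed.

Lemma dexc_top N (f : 'S_N) (x : 'I_N) :
  del_dexc f N x = [exists y, [&& f y == x, (y < x)%N & (x < f x)%N]].
Proof.
rewrite /del_dexc; apply/idP/idP => /existsP[y]; rewrite !del_succ_top => H;
  apply/existsP; exists y; move: H; by rewrite ?del_succ_top ltn_ord.
Qed.

Lemma nodexc_top N (f : 'S_N) : simsun2 f ->
  forall x y : 'I_N, f y = x -> (y < x)%N -> (x < f x)%N -> False.
Proof.
move=> /simsun2P H x y fy yx xf.
by move: (H N (leqnn N) x (ltn_ord x)); rewrite dexc_top => /existsP; apply; exists y; rewrite fy eqxx yx xf.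
Qed.

Definition liftp n (sg : 'S_n) : 'S_n.+1 := lift_perm ord_max ord_max sg.
Definition Phi n (o : option 'I_n) (sg : 'S_n) : 'S_n.+1 :=
  if o is Some j then tperm (lift ord_max j) ord_max * liftp sg else liftp sg.

Section PhiFacts.
Variables (n : nat) (o : option 'I_n) (sg : 'S_n).
Local Notation w := (lift ord_max).
Local Notation s := (Phi o sg).

Lemma Phi_w (y : 'I_n) : s (w y) = if o == Some y then ord_max else w (sg y).
Proof.
rewrite /Phi /liftp; case: o => [j|]; last by rewrite lift_perm_lift.
rewrite permM; case: (eqVneq j y) => [->|jy].
  by rewrite eqxx tpermL lift_perm_id.
have -> : (Some j == Some y) = false by apply/eqP => -[]; apply/eqP.
rewrite tpermD ?lift_perm_lift ?(inj_eq lift_inj) ?neq_lift //.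
Qed.

Lemma Phi_max : s ord_max = if o is Some j then w (sg j) else ord_max.
Proof.
rewrite /Phi /liftp; case: o => [j|]; last by rewrite lift_perm_id.
by rewrite permM tpermR lift_perm_lift.
Qed.

Lemma Phi_step (y : 'I_n) :
  s (w y) = w (sg y) \/ (s (w y) = ord_max /\ s ord_max = w (sg y)).
Proof.
rewrite Phi_w; case: eqP => [e|]; last by left.
by right; rewrite Phi_max e.
Qed.

Lemma dexc_Phi m (x : 'I_n) : (m <= n)%N -> (x < m)%N ->
  del_dexc s m (w x) = del_dexc sg m x.
Proof.
move=> mn xm; rewrite /del_dexc.
rewrite (del_succ_lift Phi_step) // !val_w.
apply/existsP/existsP => [][y].
  case: (unliftP ord_max y) => [y'|] ->; last first.
    by rewrite /= ltnNge mn.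
  rewrite val_w => /and4P[ym].
  rewrite (del_succ_lift Phi_step) // (inj_eq lift_inj) => e yx xs.
  by exists y'; rewrite ym e yx xs.
move=> /and4P[ym e yx xs]; exists (w y).
by rewrite val_w ym (del_succ_lift Phi_step) // (inj_eq lift_inj) e yx xs.
Qed.
End PhiFacts.

Definition cond n (sg : 'S_n) (o : option 'I_n) : bool :=
  if o is Some j then (j <= (sg^-1)%g j)%N else true.

Lemma simsun_Phi n (o : option 'I_n) (sg : 'S_n) :
  simsun2 (Phi o sg) = simsun2 sg && cond sg o.
Proof.
apply/idP/andP.
  move=> H.
  have Hsg : simsun2 sg.
    apply/simsun2P => m mn x xm; rewrite -(dexc_Phi o sg mn xm).
    by move/simsun2P: H; apply; [exact: leqW | rewrite val_w].
  split=> //; case: o H => [j|] // H; rewrite /= leqNgt; apply/negP => lt.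
  have ne : ((sg^-1)%g j != j) by rewrite neq_ltn lt.
  apply: (nodexc_top H (x := lift ord_max j) (y := lift ord_max ((sg^-1)%g j))).
  - rewrite Phi_w; case: eqP => [[e]|_]; first by rewrite -e eqxx in ne.
    by rewrite permKV.
  - by rewrite !val_w.
  - by rewrite Phi_w eqxx val_w /= ltn_ord.
move=> [Hsg Hc]; apply/simsun2P => m.
rewrite leq_eqVlt => /orP[/eqP->|]; last first.
  rewrite ltnS => mn x; case: (unliftP ord_max x) => [x'|] -> xm.
    rewrite dexc_Phi //; last by rewrite val_w in xm.
    by move/simsun2P: Hsg; apply => //; rewrite val_w in xm.
  by move: xm; rewrite /= ltnNge mn.
move=> x _; rewrite dexc_top; apply/existsP => -[y /and3P[/eqP fy yx xf]].
case: (unliftP ord_max x) fy yx xf => [x'|] -> fy yx xf; last first.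
  by move: xf; rewrite /= ltnNge -ltnS ltn_ord.
case: (unliftP ord_max y) fy yx xf => [y'|] -> fy yx xf; last first.
  by move: yx; rewrite val_w /= ltnNge (ltnW (ltn_ord x')).
rewrite val_w !val_w in yx.
move: fy; rewrite Phi_w; case: eqP => _ fy.
  by move: (neq_lift ord_max x'); rewrite -fy eqxx.
move/lift_inj: fy => fy.
move: xf; rewrite Phi_w; case: eqP => [oe|_] xf.
  move: Hc; rewrite oe /= -{2}fy permK => c.
  by move: yx; rewrite ltnNge c.
apply: (nodexc_top Hsg fy yx); by rewrite !val_w in xf.
Qed.


Lemma exc_sum N (s : 'S_N) : exc s = (\sum_(i < N) (i < s i)%N)%N.
Proof.
rewrite /exc -sum1_card big_mkcond /=; apply: eq_bigr => i _.
by rewrite inE; case: ifP.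
Qed.

Lemma widen_liftmax n (i : 'I_n) : widen_ord (leqnSn n) i = lift ord_max i.
Proof. by apply: ord_inj; rewrite lift_max. Qed.

Lemma bumpmax n (i : 'I_n) : bump n i = i.
Proof. by rewrite /bump leqNgt ltn_ord. Qed.

Lemma exc_Phi n (o : option 'I_n) (sg : 'S_n) :
  exc (Phi o sg) = (exc sg + (if o is Some j then (sg j <= j)%N else false))%N.
Proof.
rewrite !exc_sum big_ord_recr /=.
have -> : (@ord_max n < Phi o sg ord_max)%N = false.
  by rewrite ltnNge -ltnS ltn_ord.
rewrite addn0.
under eq_bigr => i _ do rewrite widen_liftmax Phi_w.
case: o => [j|]; last first.
  by rewrite addn0; apply: eq_bigr => i _ /=; rewrite bumpmax.
rewrite (bigD1 j) //= (bigD1 j (P := predT)) //= eqxx /= ltn_ord.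
rewrite [RHS]addnAC; congr (_ + _)%N; first by case: leqP.
apply: eq_bigr => i ij.
have -> : (Some j == Some i) = false by apply/eqP => -[e]; rewrite e eqxx in ij.
by rewrite /= bumpmax.
Qed.

Lemma porbit_fix N (s : 'S_N) x y : s x = x -> (y \in porbit s x) = (y == x).
Proof.
move=> sx; apply/porbitP/eqP => [[i ->]|->]; first by rewrite permX_fix.
by exists 0%N; rewrite expg0 perm1.
Qed.

Lemma liftpX n (sg : 'S_n) i (x : 'I_n) :
  ((liftp sg) ^+ i)%g (lift ord_max x) = lift ord_max ((sg ^+ i)%g x).
Proof.
rewrite !permX; elim: i => [|i IH] //=.
by rewrite IH /liftp lift_perm_lift.
Qed.

Lemma porbit_liftp n (sg : 'S_n) (x : 'I_n) :
  porbit (liftp sg) (lift ord_max x) = lift ord_max @: porbit sg x.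
Proof.
apply/setP => y; apply/porbitP/imsetP => [[i ->]|[z /porbitP[i ->] ->]].
  by rewrite liftpX; exists ((sg ^+ i)%g x) => //; apply: mem_porbit.
by exists i; rewrite liftpX.
Qed.

Lemma cyc_liftp n (sg : 'S_n) : cyc (liftp sg) = (cyc sg).+1.
Proof.
rewrite /cyc.
have -> : porbits (liftp sg) =
   [set ord_max] |: ((fun A : {set 'I_n} => lift ord_max @: A) @: porbits sg).
  apply/setP => A; apply/imsetP/setU1P.
    move=> [x _ ->]; case: (unliftP ord_max x) => [x'|] ->.
      by right; rewrite porbit_liftp; apply: imset_f; apply: imset_f.
    left; apply/setP => y; rewrite inE porbit_fix //.
    by rewrite /liftp lift_perm_id.
  move=> [->|/imsetP[B /imsetP[x _ ->] ->]].
    exists ord_max => //; apply/setP => y; rewrite inE porbit_fix //.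
    by rewrite /liftp lift_perm_id.
  by exists (lift ord_max x) => //; rewrite porbit_liftp.
rewrite cardsU1 card_imset; last exact/imset_inj/lift_inj.
have nin : [set @ord_max n] \notin
    (fun A : {set 'I_n} => lift ord_max @: A) @: porbits sg.
  apply/imsetP => -[B _ e].
  have : @ord_max n \in [set @ord_max n] by rewrite inE.
  rewrite e => /imsetP[z _] /eqP; by rewrite (negbTE (neq_lift _ _)).
by rewrite nin.
Qed.

Lemma cyc_Phi n (o : option 'I_n) (sg : 'S_n) :
  cyc (Phi o sg) = (cyc sg + (o == None))%N.
Proof.
case: o => [j|]; last by rewrite /= cyc_liftp addn1.
rewrite addn0 /=.
have := porbits_mul_tperm (liftp sg) (lift ord_max j) ord_max.
rewrite /= porbit_fix; last by rewrite /liftp lift_perm_id.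
have ne : (lift ord_max j != ord_max) by rewrite eq_sym neq_lift.
rewrite ne /= -/(cyc _) -/(cyc _) cyc_liftp => /eqP.
move/eqP; set a := cyc _; set b := cyc _; clearbody a b; rewrite -[(1.*2)%N]/2%N => h. have h2 : (a + 2 = b.+1 + 1)%N := h. lia.
Qed.


Definition PhiP n (p : 'S_n * option 'I_n) : 'S_n.+1 := Phi p.2 p.1.

Lemma PhiP_inj n : injective (@PhiP n).
Proof.
move=> [sg o] [sg' o'] /= e; rewrite /PhiP /= in e.
have ev y : Phi o sg y = Phi o' sg' y by rewrite e.
have ho : o = o'.
  clear e; case: o o' ev => [j|] [j'|] // ev.
  - have := ev (lift ord_max j); rewrite !Phi_w eqxx.
    by case: eqP => [->//|_] /eqP; rewrite (negbTE (neq_lift _ _)).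
  - by have := ev ord_max; rewrite !Phi_max => /eqP; rewrite eq_sym (negbTE (neq_lift _ _)).
  - by have := ev ord_max; rewrite !Phi_max => /eqP; rewrite (negbTE (neq_lift _ _)).
subst o'; congr (_, _); apply/permP => y; apply: (@lift_inj _ ord_max).
clear e; case: o ev => [j|] ev; last by have := ev (lift ord_max y); rewrite !Phi_w.
case: (eqVneq j y) => [<-|ne].
  by have := ev ord_max; rewrite !Phi_max.
have := ev (lift ord_max y); rewrite !Phi_w.
by have -> : (Some j == Some y) = false by apply/eqP => -[e']; rewrite e' eqxx in ne.
Qed.

Lemma PhiP_bij n : bijective (@PhiP n).
Proof.
apply: inj_card_bij; first exact: PhiP_inj.
by rewrite card_prod card_option card_ord !card_Sn factS mulnC.
Qed.


Lemma count_nodexc n (sg : 'S_n) :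
  (forall x y : 'I_n, sg y = x -> (y < x)%N -> (x < sg x)%N -> False) ->
  [/\ forall j : 'I_n, (j < sg j)%N -> (j <= (sg^-1)%g j)%N &
      (\sum_(j < n) ((j <= (sg^-1)%g j) && (sg j <= j))%N + 2 * exc sg = n)%N].
Proof.
move=> H.
have H1 : forall j : 'I_n, (j < sg j)%N -> (j <= (sg^-1)%g j)%N.
  move=> j js; rewrite leqNgt; apply/negP => lt.
  by apply: (H j ((sg^-1)%g j)) => //; rewrite permKV.
split=> //.
have s1 : (\sum_(j < n) (j <= (sg^-1)%g j) = \sum_(i < n) (sg i <= i))%N.
  rewrite (reindex_inj (@perm_inj _ sg)) /=.
  by apply: eq_bigr => i _; rewrite permK.
have s2 : (\sum_(i < n) (sg i <= i) + exc sg = n)%N.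
  rewrite exc_sum -big_split /=.
  rewrite (eq_bigr (fun _ => 1%N)); first by rewrite sum1_card card_ord.
  by move=> i _; case: leqP.
have s3 : (\sum_(j < n) (j <= (sg^-1)%g j) =
    \sum_(j < n) ((j <= (sg^-1)%g j) && (sg j <= j)) + exc sg)%N.
  rewrite exc_sum -big_split /=; apply: eq_bigr => j _.
  case: (ltnP j (sg j)) => h.
    by rewrite H1 // andbF.
  by rewrite andbT addn0.
lia.
Qed.

Definition Pq (R : comNzRingType) n (q : R) : {poly R} :=
  (\sum_(s in SS n) 'X^(exc s) * (q ^+ cyc s)%:P)%R.

Lemma big_opt (R : comNzRingType) (T : finType) (P : pred (option T))
   (F : option T -> R) :
  (\sum_(o | P o) F o = (if P None then F None else 0) + \sum_(j | P (Some j)) F (Some j))%R.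
Proof.
rewrite (bigID (pred1 None)) /=.
have -> : (\sum_(i | P i && (i == None)) F i = if P None then F None else 0)%R.
  case: ifP => PN.
    by rewrite (big_pred1 None) // => -[a|] /=; rewrite ?PN ?andbF.
  by rewrite big_pred0 // => -[a|] /=; rewrite ?PN ?andbF.
congr (_ + _)%R.
rewrite (reindex_omap Some id) /=; first by apply: eq_bigl => j /=; rewrite eqxx !andbT.
by move=> [j|] //=; rewrite andbF.
Qed.

Lemma XderXn (R : comNzRingType) e :
  ('X * ('X^e)^`() = e%:R * 'X^e :> {poly R})%R.
Proof.
rewrite derivXn; case: e => [|e]; first by rewrite !mulr0n mulr0 mul0r.
by rewrite /= mulrnAr -exprS mulr_natl.
Qed.

Definition cntA n (sg : 'S_n) : nat :=
  \sum_(j < n) ((j <= (sg^-1)%g j) && (sg j <= j)).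

Section Rec.
Variables (R : comNzRingType) (n : nat) (q : R).
Local Open Scope ring_scope.

Definition G m (s : 'S_m) : {poly R} := 'X^(exc s) * (q ^+ cyc s)%:P.

Lemma stepA : Pq n.+1 q =
  \sum_(sg : 'S_n | simsun2 sg) \sum_(o | cond sg o) G (Phi o sg).
Proof.
rewrite /Pq (eq_bigl (fun s => simsun2 s)); last by move=> s; rewrite inE.
rewrite (reindex (@PhiP n)) /=; last exact/onW_bij/PhiP_bij.
rewrite (eq_bigl (fun p => simsun2 p.1 && cond p.1 p.2)); last first.
  by move=> p; rewrite /PhiP simsun_Phi.
rewrite pair_big_dep /=; apply: eq_bigr => p _; rewrite /PhiP /G //.
Qed.

Lemma stepB (sg : 'S_n) : simsun2 sg ->
  \sum_(o | cond sg o) G (Phi o sg) =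
  'X^(exc sg) * (q ^+ (cyc sg).+1)%:P +
  ((cntA sg)%:R * 'X^((exc sg).+1)
    + (exc sg)%:R * 'X^(exc sg)) * (q ^+ cyc sg)%:P.
Proof.
move=> Hs; have [H1 _] := count_nodexc (nodexc_top Hs).
rewrite big_opt /G exc_Phi cyc_Phi addn0 addn1; congr (_ + _).
under eq_bigr => j _ do rewrite exc_Phi cyc_Phi addn0.
rewrite -mulr_suml; congr (_ * _).
rewrite big_mkcond /= /cntA natr_sum mulr_suml.
rewrite (exc_sum sg) natr_sum mulr_suml -big_split /=.
apply: eq_bigr => j _.
case: (ltnP j (sg j)) => h.
  by rewrite H1 // addn0 andbF /= mulr0n mulr1n mul0r add0r mul1r.
rewrite andbT addn1.
by case: (j <= _)%N; rewrite /= ?mulr0n ?mulr1n ?mul0r ?mul1r ?addr0 ?add0r.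
Qed.

Lemma Pq_rec : Pq n.+1 q =
  (q%:P + n%:R * 'X) * Pq n q + 'X * (1 - 2%:R * 'X) * (Pq n q)^`().
Proof.
have PqE : Pq n q = \sum_(s : 'S_n | simsun2 s) G s.
  by rewrite /Pq; apply: eq_bigl => s; rewrite inE.
rewrite stepA PqE.
rewrite raddf_sum /= !mulr_sumr -big_split /=.
apply: eq_bigr => sg Hs.
rewrite stepB // derivM derivC mulr0 addr0.
have [_ hA] := count_nodexc (nodexc_top Hs).
have hA' : (cntA sg)%:R = n%:R - 2%:R * (exc sg)%:R :> {poly R}.
  apply/eqP; rewrite eq_sym subr_eq -natrM -natrD.
  by rewrite /cntA hA.
rewrite hA' exprS polyCM exprS.
set Y := 'X^(exc sg); set D := Y^`(); set Q := (q ^+ cyc sg)%:P.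
have hX : 'X * D = (exc sg)%:R * Y by rewrite /D /Y XderXn.
rewrite /G -/Y -/Q.
have -> : 'X * (1 - 2%:R * 'X) * (D * Q) = (1 - 2%:R * 'X) * ('X * D) * Q.
  by clear hX; move: 'X D Q => a b c; ring.
rewrite hX.
clear hX hA' hA PqE D; move: (n%:R) (exc sg)%:R Y Q 'X (q%:P) => N e y Q0 X0 q0.
ring.
Qed.
End Rec.

Section Alg.
Local Open Scope ring_scope.

Lemma Pq0 (R : comNzRingType) (q : R) : Pq 0 q = 1.
Proof.
rewrite /Pq.
rewrite (eq_bigr (fun _ => 1)); last first.
  move=> s _; rewrite exc_sum big_ord0 /cyc.
  have -> : #|porbits s| = 0%N.
    apply/eqP; rewrite -leqn0; apply: leq_trans (leq_imset_card _ _) _; by rewrite cardT size_enum_ord.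
  by rewrite /= polyC1 mulr1.
rewrite sumr_const.
have -> : #|SS 0| = 1%N.
  rewrite -[RHS](card_Sn 0); apply: eq_card => s.
  by rewrite inE; apply/forallP => m; apply/forallP => -[].
by [].
Qed.

Lemma hornerPq (R : comNzRingType) n (x q : R) : (Pq n q).[x] = Sxq n x q.
Proof.
rewrite /Pq /Sxq horner_sum; apply: eq_bigr => s _.
by rewrite hornerM hornerXn hornerC.
Qed.

Lemma mul_derivX (R : comNzRingType) (u : {poly R}) m :
  u * (u ^+ m)^`() = u^`() * u ^+ m * m%:R.
Proof.
rewrite deriv_exp; case: m => [|m]; first by rewrite !mulr0n !mulr0.
rewrite /= -mulr_natr exprS; move: (u^`()) (u ^+ m) ((m.+1)%:R) => a b c; ring.
Qed.

Lemma Pq_m1 (R : comNzRingType) m :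
  Pq (2 * m).+1 (-1 : R) = - (1 - 2%:R * 'X) ^+ m /\
  Pq (2 * m).+2 (-1 : R) = (1 - 'X) * (1 - 2%:R * 'X) ^+ m.
Proof.
set u : {poly R} := 1 - 2%:R * 'X.
have du : u^`() = - 2%:R.
  by rewrite /u derivB -polyC1 derivC sub0r mulr_natl derivMn derivX.
have dX : (1 - 'X : {poly R})^`() = -1 by rewrite derivB -polyC1 derivC derivX sub0r.
have qC : (-1 : R)%:P = -1 by rewrite polyCN polyC1.
have O2E k : Pq (2 * k).+1 (-1 : R) = - u ^+ k ->
             Pq (2 * k).+2 (-1 : R) = (1 - 'X) * u ^+ k.
  move=> h; rewrite Pq_rec h qC derivN.
  have -> : 'X * (1 - 2%:R * 'X) * - (u ^+ k)^`() = - ('X * (u * (u ^+ k)^`())).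
    by rewrite /u; ring.
  rewrite mul_derivX du; ring.
have E2O k : Pq (2 * k).+2 (-1 : R) = (1 - 'X) * u ^+ k ->
             Pq (2 * k.+1).+1 (-1 : R) = - u ^+ k.+1.
  move=> h; rewrite (_ : (2 * k.+1).+1 = (2 * k).+3)%N; last by lia.
  rewrite Pq_rec h qC derivM dX.
  have -> : 'X * (1 - 2%:R * 'X) * (-1 * u ^+ k + (1 - 'X) * (u ^+ k)^`()) =
    - 'X * u * u ^+ k + 'X * (1 - 'X) * (u * (u ^+ k)^`()).
    by rewrite /u; ring.
  rewrite mul_derivX du exprS /u; ring.
elim: m => [|m [IHo IHe]].
  have h : Pq 1 (-1 : R) = - u ^+ 0.
    by rewrite Pq_rec Pq0 qC -polyC1 derivC expr0; ring.
  by split => //; apply: O2E.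
have ho := E2O _ IHe; split => //.
by apply: O2E.
Qed.

Lemma hornerPq_rec (R : comNzRingType) n (q x : R) :
  (Pq n.+1 q).[x] = (q + n%:R * x) * (Pq n q).[x] +
                    x * (1 - 2%:R * x) * (Pq n q)^`().[x].
Proof.
rewrite Pq_rec hornerD !hornerM hornerD hornerC hornerM hornerX.
by rewrite hornerD hornerN hornerM hornerX -polyC1 -!polyC_natr !hornerC.
Qed.

End Alg.

Section AnaWrap.
Local Open Scope ring_scope.

Section Ana.
Variables (R : realType) (q : R).

Lemma U_facts (z : R) : -1 < z < 1 ->
  [/\ 0 < cos z, 0 < 1 - sin z & 0 < 1 + sin z].
Proof.
move=> /andP[z1 z2].
have hpi := @pi_ge2 R.
have hc : 0 < cos z by apply: cos_gt0_pihalf; apply/andP; split; lra.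
have h := cos2Dsin2 z.
split => //; nra.
Qed.

Lemma dsub (z : R) : is_derive z 1 (fun y : R => 1 - sin y) (- cos z).
Proof.
have h : is_derive z 1 (cst 1 - @sin R) (0 - cos z).
  apply: is_deriveB.
rewrite sub0r in h; exact: h.
Qed.

Definition fF (y : R) := powR (1 - sin y) (- q).
Definition wF (y : R) := cos y / (1 - sin y).
Definition xF (y : R) := (1 + sin y)^-1.
Arguments fF : simpl never.
Arguments wF : simpl never.
Arguments xF : simpl never.

Lemma dadd (z : R) : is_derive z 1 (fun y : R => 1 + sin y) (cos z).
Proof.
have h : is_derive z 1 (cst 1 + @sin R) (0 + cos z).
  apply: is_deriveD.
rewrite add0r in h; exact: h.
Qed.

Section At.
Variable z : R.
Hypothesis hz : -1 < z < 1.

Lemma d_f : is_derive z 1 fF (q * wF z * fF z).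
Proof.
have [hc hs1 hs2] := U_facts hz.
have h1 : is_derive (1 - sin z) 1 (@powR R ^~ (- q))
    ((- q) * (1 - sin z) `^ (- q - 1)) := is_derive1_powR (- q) hs1.
have h := is_derive1_comp (g := fun y : R => 1 - sin y) h1 (dsub z).
have h' : is_derive z 1 fF ((- q) * (1 - sin z) `^ (- q - 1) * (- cos z)) := h.
apply: is_derive_eq h' _.
rewrite powRB; last by rewrite (gt_eqF hs1) implybT.
rewrite powRr1; last exact: ltW.
rewrite /wF /fF.
have : 1 - sin z != 0 by rewrite gt_eqF.
move: (1 - sin z) (cos z) ((1 - sin z) `^ (-q)) => a c F a0.
field.
exact: a0.
Qed.

Let sE (a b : R) : a *: b = a * b. Proof. by []. Qed.

Lemma d_w : is_derive z 1 wF (wF z ^+ 2 * xF z).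
Proof.
have [hc hs1 hs2] := U_facts hz.
have hV := is_deriveV (f := fun y : R => 1 - sin y) (lt0r_neq0 hs1) (dsub z).
have hM := is_deriveM (is_derive_cos z) hV.
have h' : is_derive z 1 wF _ := hM.
apply: is_derive_eq h' _.
rewrite !sE /wF /xF.
have c2 : cos z ^+ 2 = 1 - sin z ^+ 2 by rewrite -(cos2Dsin2 z) addrK.
have a0 : 1 - sin z != 0 by rewrite lt0r_neq0.
have b0 : 1 + sin z != 0 by rewrite lt0r_neq0.
move: (cos z) (sin z) c2 a0 b0 => c s c2 a0 b0.
transitivity ((c ^+ 2 - s * (1 - s)) / (1 - s) ^+ 2); first by field; rewrite ?a0 ?b0.
symmetry; transitivity (c ^+ 2 / ((1 - s) ^+ 2 * (1 + s))); first by field; rewrite ?a0 ?b0.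
rewrite c2; field.
by rewrite a0 b0.
Qed.

Lemma d_x : is_derive z 1 xF (wF z * xF z * (1 - 2 * xF z)).
Proof.
have [hc hs1 hs2] := U_facts hz.
have hV := is_deriveV (f := fun y : R => 1 + sin y) (lt0r_neq0 hs2) (dadd z).
have h' : is_derive z 1 xF _ := hV.
apply: is_derive_eq h' _.
rewrite !sE /wF /xF.
have a0 : 1 - sin z != 0 by rewrite lt0r_neq0.
have b0 : 1 + sin z != 0 by rewrite lt0r_neq0.
move: (cos z) (sin z) a0 b0 => c s a0 b0.
field.
by rewrite a0 b0.
Qed.

Lemma d_W n : is_derive z 1 (fun y => wF y ^+ n) (n%:R * xF z * wF z ^+ n * wF z).
Proof.
have hX := is_deriveX n d_w.
rewrite exprfctE in hX.
apply: is_derive_eq hX _.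
rewrite sE; case: n => [|k]; first by rewrite !mul0r.
rewrite /= [wF z ^+ k.+1]exprS.
move: (wF z) (xF z) (wF z ^+ k) (k.+1%:R) => a b c d; ring.
Qed.

Lemma d_P (p : {poly R}) :
  is_derive z 1 (fun y => p.[xF y]) (p^`().[xF z] * (wF z * xF z * (1 - 2 * xF z))).
Proof.
exact: (is_derive1_comp (g := xF) (is_derive_poly p (xF z)) d_x).
Qed.

Lemma d_g n : is_derive z 1 (fun y => fF y * (wF y ^+ n * (Pq n q).[xF y]))
   (fF z * (wF z ^+ n.+1 * (Pq n.+1 q).[xF z])).
Proof.
have h := is_deriveM d_f (is_deriveM (d_W n) (d_P (Pq n q))).
have h' : is_derive z 1 (fun y => fF y * (wF y ^+ n * (Pq n q).[xF y])) _ := h.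
apply: is_derive_eq h' _.
have -> : ((fun y => wF y ^+ n) * (fun y => (Pq n q).[xF y])) z =
   wF z ^+ n * (Pq n q).[xF z] by [].
rewrite !sE hornerPq_rec [wF z ^+ n.+1]exprS.
move: (fF z) (wF z) (xF z) (wF z ^+ n) ((Pq n q).[xF z]) ((Pq n q)^`().[xF z]) (n%:R)
  => F w x W P0 P1 N.
ring.
Qed.
End At.

Lemma main_ana n : forall z, -1 < z < 1 ->
  derive1n n fF z = fF z * (wF z ^+ n * (Pq n q).[xF z]).
Proof.
elim: n => [|n IH] z hz.
  by rewrite derive1n0 Pq0 -polyC1 hornerC expr0 mul1r mulr1.
rewrite derive1nS derive1E.
rewrite (near_eq_derive (g := fun y => fF y * (wF y ^+ n * (Pq n q).[xF y]))).
  by have [_ ->] := d_g hz n.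
have hz' : z \in `]-1, 1[ by rewrite in_itv /=.
near=> y; apply: IH.
have : y \in `]-1, 1[ by near: y; exact: near_in_itvoo.
by rewrite in_itv.
Unshelve. all: by end_near.
Qed.

Lemma part1 n : derive1n n (fun z : R => powR (1 - sin z) (- q)) 0 = Sxq n 1 q.
Proof.
have h0 : -1 < (0 : R) < 1 by rewrite ltrN10 ltr01.
have := main_ana n h0.
rewrite /fF => ->.
rewrite /wF /xF sin0 cos0 subr0 addr0 invr1 mulr1 expr1n mul1r.
by rewrite powR1 mul1r hornerPq.
Qed.
End Ana.

End AnaWrap.

Local Open Scope ring_scope.

Theorem mainTheorem12 :
  (* EGF: the n-th Taylor coefficient (times n!) at 0 of (1 - sin z)^(-q)
     is S_n(1,q), for every real q and every n >= 0. *)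
  (forall (R : realType) (q : R) (n : nat),
      derive1n n (fun z : R => powR (1 - sin z) (- q)) 0 = Sxq n 1 q)
  /\
  (* S_n(x,-1), n >= 1, as an identity valid in every commutative ring. *)
  (forall (R : comNzRingType) (x : R),
     (forall m : nat, (1 <= m)%N ->
        Sxq (2 * m)%N x (-1) = (1 - x) * (1 - 2%:R * x) ^+ (m - 1)) /\
     (forall m : nat,
        Sxq (2 * m).+1 x (-1) = - (1 - 2%:R * x) ^+ m)).
Proof.
split.
  by move=> R q n; apply: part1.
move=> R x; split.
  case=> [//|k] _.
  have [_ he] := Pq_m1 R k.
  rewrite -hornerPq (_ : (2 * k.+1)%N = (2 * k).+2); last by rewrite mulnS.
  rewrite he subn1 /= hornerM horner_exp !hornerD !hornerN hornerM hornerX.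
  by rewrite -polyC1 -polyC_natr !hornerC.
move=> m; have [ho _] := Pq_m1 R m.
rewrite -hornerPq ho hornerN horner_exp hornerD hornerN hornerM hornerX.
by rewrite -polyC1 -polyC_natr !hornerC.
Qed.
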